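(* For any complex numbers $a,b,\alpha,\beta,\eta,\xi$ with $\beta a-\alpha b\neq0$ and any natural number $n\ge1$, \[ \sum_{r=0}^{\lfloor n/2\rfloor}\Psi\left(\begin{array}{cc|c} a & b & n \\ \alpha & \beta & r \end{array}\right)\xi^{\lfloor n/2\rfloor-r}\eta^r=\Psi(a\xi-\alpha\eta,\,b\xi-\beta\eta,\,n), \] \[ \sum_{r=0}^{\lfloor (n-1)/2\rfloor}\Phi\left(\begin{array}{cc|c} a & b & n \\ \alpha & \beta & r \end{array}\right)\xi^{\lfloor (n-1)/2\rfloor-r}\eta^r=\Phi(a\xi-\alpha\eta,\,b\xi-\beta\eta,\,n). \]
   Context: $\delta(m)=1$ for $m$ odd, $0$ for $m$ even; $\lfloor\cdot\rfloor$ is the floor. $\Psi(a,b,n)$, $\Phi(a,b,n)$ are defined by $\Psi(a,b,0)=2$, $\Psi(a,b,1)=1$, $\Psi(a,b,n+1)=(2a-b)^{\delta(n)}\Psi(a,b,n)-a\Psi(a,b,n-1)$ and $\Phi(a,b,0)=0$, $\Phi(a,b,1)=1$, $\Phi(a,b,n+1)=(2a-b)^{\delta(n+1)}\Phi(a,b,n)-a\Phi(a,b,n-1)$. For $n\ge1$ and numbers with $\beta a-\alpha b\ne0$, $\Psi\left(\begin{array}{cc|c} a & b & n \\ \alpha & \beta & r \end{array}\right)$ ($0\le r\le\lfloor n/2\rfloor$) and $\Phi\left(\begin{array}{cc|c} a & b & n \\ \alpha & \beta & r \end{array}\right)$ ($0\le r\le\lfloor (n-1)/2\rfloor$) are the unique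 numbers such that, identically in $x,y$, $(\beta a-\alpha b)^{\lfloor n/2\rfloor}\frac{x^n+y^n}{(x+y)^{\delta(n)}}=\sum_{r}\Psi\left(\begin{array}{cc|c} a & b & n \\ \alpha & \beta & r \end{array}\right)(\alpha x^2+\beta xy+\alpha y^2)^{\lfloor n/2\rfloor-r}(ax^2+bxy+ay^2)^r$ and $(\beta a-\alpha b)^{\lfloor (n-1)/2\rfloor}\frac{x^n-y^n}{(x-y)(x+y)^{\delta(n-1)}}=\sum_{r}\Phi\left(\begin{array}{cc|c} a & b & n \\ \alpha & \beta & r \end{array}\right)(\alpha x^2+\beta xy+\alpha y^2)^{\lfloor (n-1)/2\rfloor-r}(ax^2+bxy+ay^2)^r$. *)

(* Defs.v *)
From HB Require Import structures.
From mathcomp Require Import all_boot all_order all_algebra.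
From mathcomp Require Import complex.
From mathcomp Require Import reals.
From Stdlib Require Import ClassicalEpsilon.
Set Implicit Arguments. Unset Strict Implicit. Unset Printing Implicit Defensive.
Import Order.TTheory GRing.Theory Num.Theory.
Local Open Scope ring_scope.

Section Defs.
Variable F : fieldType.

Definition delta (m : nat) : nat := odd m.

(* (Psi(a,b,n), Psi(a,b,n+1)) *)
Fixpoint PsiPair (a b : F) (n : nat) : F * F :=
  match n with
  | 0 => (2, 1)
  | n'.+1 => let: (p, q) := PsiPair a b n' in
             (q, (2 * a - b) ^+ delta n * q - a * p)
  end.
Definition Psi (a b : F) (n : nat) : F := (PsiPair a b n).1.

(* (Phi(a,b,n), Phi(a,b,n+1)) *)
Fixpoint PhiPair (a b : F) (n : nat) : F * F :=
  match n with
  | 0 => (0, 1)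
  | n'.+1 => let: (p, q) := PhiPair a b n' in
             (q, (2 * a - b) ^+ delta n.+1 * q - a * p)
  end.
Definition Phi (a b : F) (n : nat) : F := (PhiPair a b n).1.

(* defining identity of the coefficients Psi(a b n | alpha beta r),
   r = 0 .. floor(n/2), "identically in x, y" (away from the pole x+y=0) *)
Definition is_Psi_coef (a b al be : F) (n : nat) (c : nat -> F) : Prop :=
  forall x y : F, x + y != 0 ->
    (be * a - al * b) ^+ n./2 * ((x ^+ n + y ^+ n) / (x + y) ^+ delta n)
    = \sum_(0 <= r < n./2.+1)
        c r * (al * x ^+ 2 + be * x * y + al * y ^+ 2) ^+ (n./2 - r)
            * (a * x ^+ 2 + b * x * y + a * y ^+ 2) ^+ r.

Definition is_Phi_coef (a b al be : F) (n : nat) (c : nat -> F) : Prop :=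
  forall x y : F, x - y != 0 -> x + y != 0 ->
    (be * a - al * b) ^+ n.-1./2
      * ((x ^+ n - y ^+ n) / ((x - y) * (x + y) ^+ delta n.-1))
    = \sum_(0 <= r < n.-1./2.+1)
        c r * (al * x ^+ 2 + be * x * y + al * y ^+ 2) ^+ (n.-1./2 - r)
            * (a * x ^+ 2 + b * x * y + a * y ^+ 2) ^+ r.

(* "the unique numbers" satisfying the identity (chosen by description;
   existence/uniqueness is the paper's claim, to be used in proofs) *)
Definition PsiC (a b al be : F) (n : nat) : nat -> F :=
  epsilon (inhabits (fun _ => 0)) (is_Psi_coef a b al be n).
Definition PhiC (a b al be : F) (n : nat) : nat -> F :=
  epsilon (inhabits (fun _ => 0)) (is_Phi_coef a b al be n).
End Defs.

(* Main.v *)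
Require Import Defs.
From HB Require Import structures.
From mathcomp Require Import all_boot all_order all_algebra.
From mathcomp Require Import complex reals.
From mathcomp Require Import ring zify.
From Stdlib Require Import ClassicalEpsilon.
Set Implicit Arguments. Unset Strict Implicit. Unset Printing Implicit Defensive.
Import Order.TTheory GRing.Theory Num.Theory.
Local Open Scope ring_scope.

Section Gen.
Variable R : comNzRingType.

Fixpoint WPsi (S P : R) (n : nat) : R * R :=
  match n with
  | 0 => (2, 1)
  | n'.+1 => let: (p, q) := WPsi S P n' in
             (q, S ^+ delta n * q - P * p)
  end.

Fixpoint WPhi (S P : R) (n : nat) : R * R :=
  match n with
  | 0 => (0, 1)
  | n'.+1 => let: (p, q) := WPhi S P n' in
             (q, S ^+ delta n.+1 * q - P * p)
  end.

Lemma WPsiS S P n : WPsi S P n.+1 = ((WPsi S P n).2,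
   S ^+ delta n.+1 * (WPsi S P n).2 - P * (WPsi S P n).1).
Proof. by rewrite /=; case: (WPsi S P n). Qed.

Lemma WPhiS S P n : WPhi S P n.+1 = ((WPhi S P n).2,
   S ^+ delta n.+2 * (WPhi S P n).2 - P * (WPhi S P n).1).
Proof. by rewrite /=; case: (WPhi S P n). Qed.

Lemma WPsi_hom k S P n :
  WPsi (k * S) (k * P) n = (k ^+ n./2 * (WPsi S P n).1, k ^+ n.+1./2 * (WPsi S P n).2).
Proof.
elim: n => [|n IH]; first by rewrite /= !expr0 !mul1r.
rewrite !WPsiS IH /=; congr pair.
rewrite /delta /= uphalf_half; case: (odd n) => /=; rewrite ?add0n ?add1n !exprS ?expr0; ring.
Qed.

Lemma WPhi_hom k S P n :
  WPhi (k * S) (k * P) n = (k ^+ n.-1./2 * (WPhi S P n).1, k ^+ n./2 * (WPhi S P n).2).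
Proof.
elim: n => [|n IH]; first by rewrite /= !expr0 !mul1r.
rewrite !WPhiS IH /=; congr pair.
case: n IH => [|n] IH.
  by rewrite /= !expr0 !mulr0 !mul1r subr0.
rewrite /delta /= uphalf_half; case: (odd n) => /=; rewrite ?add0n ?add1n !exprS ?expr0; ring.
Qed.

Lemma WPsi_closed x y n :
  (WPsi ((x + y) ^+ 2) (x * y) n).1 * (x + y) ^+ odd n = x ^+ n + y ^+ n
  /\ (WPsi ((x + y) ^+ 2) (x * y) n).2 * (x + y) ^+ odd n.+1 = x ^+ n.+1 + y ^+ n.+1.
Proof.
elim: n => [|n [IH1 IH2]]; first by rewrite /= !expr0 !expr1 !mulr1 mul1r.
rewrite WPsiS /=; split; first exact: IH2.
have E : x ^+ n.+2 + y ^+ n.+2 = (x + y) * (x ^+ n.+1 + y ^+ n.+1) - x * y * (x ^+ n + y ^+ n).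
  rewrite !exprS. ring.
rewrite E -IH1 -IH2 /delta /=.
case: (odd n) => /=; rewrite ?expr0 ?expr1; ring.
Qed.

Lemma WPhi_closed x y n :
  (WPhi ((x + y) ^+ 2) (x * y) n).1 * (x - y) * (x + y) ^+ (~~ odd n) = x ^+ n - y ^+ n
  /\ (WPhi ((x + y) ^+ 2) (x * y) n).2 * (x - y) * (x + y) ^+ (~~ odd n.+1) = x ^+ n.+1 - y ^+ n.+1.
Proof.
elim: n => [|n [IH1 IH2]]; first by rewrite /= !expr0 !expr1 !mul0r subrr mulr1 mul1r.
rewrite WPhiS /=; split; first exact: IH2.
have E : x ^+ n.+2 - y ^+ n.+2 = (x + y) * (x ^+ n.+1 - y ^+ n.+1) - x * y * (x ^+ n - y ^+ n).
  rewrite !exprS. ring.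
rewrite E -IH1 -IH2 /delta /=.
case: (odd n) => /=; rewrite ?expr0 ?expr1; ring.
Qed.

End Gen.

Lemma WPsi_morph (R R' : comNzRingType) (f : {rmorphism R -> R'}) S P n :
  f (WPsi S P n).1 = (WPsi (f S) (f P) n).1 /\ f (WPsi S P n).2 = (WPsi (f S) (f P) n).2.
Proof.
elim: n => [|n [IH1 IH2]]; first by rewrite /= rmorph1 rmorph_nat.
rewrite !WPsiS /=; split => //.
by rewrite rmorphB !rmorphM rmorphXn IH1 IH2.
Qed.

Lemma WPhi_morph (R R' : comNzRingType) (f : {rmorphism R -> R'}) S P n :
  f (WPhi S P n).1 = (WPhi (f S) (f P) n).1 /\ f (WPhi S P n).2 = (WPhi (f S) (f P) n).2.
Proof.
elim: n => [|n [IH1 IH2]]; first by rewrite /= rmorph1 rmorph0.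
rewrite !WPhiS /=; split => //.
by rewrite rmorphB !rmorphM rmorphXn IH1 IH2.
Qed.

Lemma Psi_WPsi (F : fieldType) (a b : F) n : Psi a b n = (WPsi (2 * a - b) a n).1.
Proof.
suff : PsiPair a b n = WPsi (2 * a - b) a n by rewrite /Psi => ->.
elim: n => [|n IH] //=. by rewrite IH.
Qed.

Lemma Phi_WPhi (F : fieldType) (a b : F) n : Phi a b n = (WPhi (2 * a - b) a n).1.
Proof.
suff : PhiPair a b n = WPhi (2 * a - b) a n by rewrite /Phi => ->.
elim: n => [|n IH] //=. by rewrite IH.
Qed.

Lemma poly_vanish (F : numFieldType) (p : {poly F}) (s : seq F) :
  (forall x, x \notin s -> p.[x] = 0) -> p = 0.
Proof.
move=> H; apply/eqP; apply: contraT => hp.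
pose l := [seq i%:R : F | i <- iota 0 (size p + size s)].
pose rs := [seq x <- l | x \notin s].
have ul : uniq l.
  rewrite map_inj_uniq ?iota_uniq // => i j /eqP; rewrite eqr_nat => /eqP.
  done.
have allr : all (root p) rs.
  apply/allP => x; rewrite mem_filter => /andP[xs _]; by rewrite /root H.
have := max_poly_roots hp allr (filter_uniq _ ul).
have c1 : (count (mem s) l <= size s)%N.
  rewrite -size_filter; apply: uniq_leq_size; first exact: filter_uniq.
  by move=> x; rewrite mem_filter => /andP[].
have := count_predC (mem s) l.
rewrite size_map size_iota /rs size_filter.
have -> : count (fun x => x \notin s) l = count (predC (mem s)) l by [].
move=> E1 E2.
have hp0 : (0 < size p)%N by rewrite size_poly_gt0.
have := leq_add c1 E2; rewrite addnS E1 addnC ltnn; done.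
Qed.

Lemma lin_ne0 (F : fieldType) (c1 c2 t : F) :
  (c1 != 0) || (c2 != 0) -> t != - c1 / c2 -> c1 * 1 + c2 * t != 0.
Proof.
move=> h ht; rewrite mulr1; have [c20|c2n0] := eqVneq c2 0.
  by rewrite c20 mul0r addr0; move: h; rewrite c20 eqxx orbF.
apply: contra ht; rewrite addrC addr_eq0 => /eqP E.
by rewrite -E mulrC mulKf.
Qed.

Lemma form_zero (F : numFieldType) (d : nat -> F) m c1 c2 c1' c2' :
  (c1 != 0) || (c2 != 0) -> (c1' != 0) || (c2' != 0) ->
  (forall xi eta, c1 * xi + c2 * eta != 0 -> c1' * xi + c2' * eta != 0 ->
     \sum_(0 <= r < m.+1) d r * xi ^+ (m - r) * eta ^+ r = 0) ->
  forall r, (r <= m)%N -> d r = 0.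
Proof.
move=> h1 h2 H.
have q0 : \poly_(i < m.+1) d i = 0.
  apply: (poly_vanish (s := [:: - c1 / c2; - c1' / c2'])) => t.
  rewrite !inE negb_or => /andP[t1 t2].
  rewrite horner_poly; apply: etrans (H 1 t (lin_ne0 h1 t1) (lin_ne0 h2 t2)); rewrite big_mkord.
  by apply: eq_bigr => i _; rewrite expr1n mulr1.
move=> r hr; have := congr1 (fun p : {poly F} => p`_r) q0.
by rewrite coef_poly coef0 ltnS hr.
Qed.

Section Form.
Variable F : numClosedFieldType.
Variable W : forall R : comNzRingType, R -> R -> R.
Variable m : nat.
Hypothesis Wmorph : forall (R R' : comNzRingType) (f : {rmorphism R -> R'}) (S P : R),
  f (W S P) = W (f S) (f P).
Hypothesis Whom : forall (R : comNzRingType) (k S P : R),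
  W (k * S) (k * P) = k ^+ m * W S P.
Hypothesis Wsize : forall c0 c1 d0 d1 : F,
  (size (W (c1%:P * 'X + c0%:P) (d1%:P * 'X + d0%:P)) <= m.+1)%N.

Variables a b al be : F.
Hypothesis hD : be * a - al * b != 0.

Definition hpoly := W ((- (2 * al - be))%:P * 'X + (2 * a - b)%:P) ((- al)%:P * 'X + a%:P).

Lemma horner_W (S P : {poly F}) x : (W S P).[x] = W S.[x] P.[x].
Proof. exact: (Wmorph (horner_eval x) S P). Qed.

Lemma form_nz xi eta : xi != 0 ->
  \sum_(0 <= r < m.+1) hpoly`_r * xi ^+ (m - r) * eta ^+ r
  = W ((2 * a - b) * xi - (2 * al - be) * eta) (a * xi - al * eta).
Proof.
move=> hxi.
have E : \sum_(0 <= r < m.+1) hpoly`_r * xi ^+ (m - r) * eta ^+ r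
       = xi ^+ m * hpoly.[eta / xi].
  rewrite (horner_coef_wide _ (Wsize _ _ _ _)) mulr_sumr big_mkord.
  apply: eq_bigr => i _.
  have hi : (i <= m)%N by rewrite -ltnS.
  have hX : xi ^+ i != 0 by rewrite expf_neq0.
  have e : xi ^+ m = xi ^+ (m - i) * xi ^+ i by rewrite -exprD subnK.
  rewrite e expr_div_n.
  by field.
rewrite E horner_W !(hornerD, hornerCM, hornerX, hornerC) -Whom; congr W; field=> //.
Qed.

Lemma form_all xi eta :
  \sum_(0 <= r < m.+1) hpoly`_r * xi ^+ (m - r) * eta ^+ r
  = W ((2 * a - b) * xi - (2 * al - be) * eta) (a * xi - al * eta).
Proof.
have [->|hxi] := eqVneq xi 0; last exact: form_nz.
pose P1 := \sum_(0 <= r < m.+1) (hpoly`_r * eta ^+ r)%:P * 'X^(m - r).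
pose P2 := W ((2 * a - b)%:P * 'X + (- ((2 * al - be) * eta))%:P)
             (a%:P * 'X + (- (al * eta))%:P).
have E1 x : P1.[x] = \sum_(0 <= r < m.+1) hpoly`_r * x ^+ (m - r) * eta ^+ r.
  rewrite /P1 horner_sum; apply: eq_bigr => i _.
  by rewrite hornerCM hornerXn mulrAC.
have E2 x : P2.[x] = W ((2 * a - b) * x - (2 * al - be) * eta) (a * x - al * eta).
  by rewrite /P2 horner_W !(hornerD, hornerCM, hornerX, hornerC).
have P0 : P1 - P2 = 0.
  apply: (poly_vanish (s := [:: 0])) => x; rewrite inE => hx.
  by rewrite hornerD hornerN E1 E2 form_nz // subrr.
have := congr1 (horner^~ 0) P0.
rewrite /= hornerD hornerN E1 E2 horner0 => /eqP; rewrite subr_eq0 => /eqP.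
done.
Qed.

Lemma form_exist x y :
  \sum_(0 <= r < m.+1) hpoly`_r * (al * x ^+ 2 + be * x * y + al * y ^+ 2) ^+ (m - r)
      * (a * x ^+ 2 + b * x * y + a * y ^+ 2) ^+ r
  = (be * a - al * b) ^+ m * W ((x + y) ^+ 2) (x * y).
Proof. rewrite form_all -Whom; congr W; ring. Qed.

Lemma form_uniq (c : nat -> F) :
  (forall x y, x - y != 0 -> x + y != 0 ->
     \sum_(0 <= r < m.+1) c r * (al * x ^+ 2 + be * x * y + al * y ^+ 2) ^+ (m - r)
      * (a * x ^+ 2 + b * x * y + a * y ^+ 2) ^+ r
     = (be * a - al * b) ^+ m * W ((x + y) ^+ 2) (x * y)) ->
  forall xi eta, \sum_(0 <= r < m.+1) c r * xi ^+ (m - r) * eta ^+ r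
  = W ((2 * a - b) * xi - (2 * al - be) * eta) (a * xi - al * eta).
Proof.
move=> H xi eta.
set D := be * a - al * b.
have dz := @form_zero F (fun r => c r - hpoly`_r) m (2 * a - b) (- (2 * al - be))
   (2 * a - b - 4 * a) (- (2 * al - be) + 4 * al).
have h1 : (2 * a - b != 0) || (- (2 * al - be) != 0).
  rewrite -negb_and; apply: contra hD => /andP[/eqP e1 /eqP e2].
  move/subr0_eq: e1 => e1; move/eqP: e2; rewrite oppr_eq0 => /eqP /subr0_eq e2.
  by rewrite -e1 -e2; apply/eqP; ring.
have h2 : (2 * a - b - 4 * a != 0) || (- (2 * al - be) + 4 * al != 0).
  rewrite -negb_and; apply: contra hD => /andP[/eqP e1 /eqP e2].
  have e1' : b = - (2 * a) by apply/eqP; rewrite -subr_eq0 -oppr_eq0 -e1; apply/eqP; ring.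
  have e2' : be = - (2 * al) by apply/eqP; rewrite -subr_eq0 -e2; apply/eqP; ring.
  by rewrite e1' e2'; apply/eqP; ring.
have {dz h1 h2} dz := dz h1 h2.
have hz : forall r, (r <= m)%N -> c r = hpoly`_r.
  apply: (fun K r hr => subr0_eq (dz K r hr)) => {}xi {}eta l1 l2.
  set S0 := ((2 * a - b) * xi - (2 * al - be) * eta) / D.
  set P0 := (a * xi - al * eta) / D.
  set s := sqrtC S0; set r := sqrtC (S0 - 4 * P0).
  have hs : s ^+ 2 = S0 by rewrite sqrtCK.
  have hr : r ^+ 2 = S0 - 4 * P0 by rewrite sqrtCK.
  have S0n : S0 != 0.
    rewrite mulf_neq0 ?invr_eq0 //.
    by move: l1; congr (~~ (_ == _)); ring.
  have R0n : S0 - 4 * P0 != 0.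
    have -> : S0 - 4 * P0 = ((2 * a - b - 4 * a) * xi + (- (2 * al - be) + 4 * al) * eta) / D.
      rewrite /S0 /P0; field; done.
    by rewrite mulf_neq0 ?invr_eq0.
  have sn : s != 0 by apply: contra S0n => /eqP s0; rewrite -hs s0 expr2 mulr0.
  have rn : r != 0 by apply: contra R0n => /eqP s0; rewrite -hr s0 expr2 mulr0.
  set x := (s + r) / 2; set y := (s - r) / 2.
  have two : (2 : F) != 0 by rewrite pnatr_eq0.
  have hxy : x + y = s by rewrite /x /y; field.
  have hxy' : x - y = r by rewrite /x /y; field.
  have hu : al * x ^+ 2 + be * x * y + al * y ^+ 2 = xi.
    have -> : al * x ^+ 2 + be * x * y + al * y ^+ 2
       = al * (s ^+ 2 + r ^+ 2) / 2 + be * (s ^+ 2 - r ^+ 2) / 4.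
      by rewrite /x /y; field.
    by rewrite hs hr /S0 /P0 /D; field; rewrite ?pnatr_eq0.
  have hv : a * x ^+ 2 + b * x * y + a * y ^+ 2 = eta.
    have -> : a * x ^+ 2 + b * x * y + a * y ^+ 2
       = a * (s ^+ 2 + r ^+ 2) / 2 + b * (s ^+ 2 - r ^+ 2) / 4.
      by rewrite /x /y; field.
    by rewrite hs hr /S0 /P0 /D; field; rewrite ?pnatr_eq0.
  have Hc := H x y; rewrite hxy' hxy hu hv in Hc.
  have Hs := form_exist x y; rewrite hu hv in Hs.
  under eq_bigr do rewrite !mulrBl.
  by rewrite sumrB Hc // Hs hxy subrr.
rewrite -form_all; apply: eq_big_nat => r /andP[_ hr].
by rewrite hz.
Qed.

End Form.

Lemma sizeXe (R : nzSemiRingType) (S : {poly R}) e :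
  (size S <= 2)%N -> (size (S ^+ e) <= e.+1)%N.
Proof.
move=> h; apply: leq_trans (size_poly_exp_leq S e) _.
have h1 : ((size S).-1 <= 1)%N by lia.
rewrite ltnS; apply: (leq_trans (leq_mul h1 (leqnn e))); by rewrite mul1n.
Qed.

Lemma sizeM_le (R : nzSemiRingType) (p q : {poly R}) a b :
  (size p <= a)%N -> (size q <= b)%N -> (size (p * q)%R <= (a + b).-1)%N.
Proof. move=> hp hq; apply: leq_trans (size_polyMleq p q) _; lia. Qed.

Lemma WPsi_size (R : comNzRingType) (S P : {poly R}) n :
  (size S <= 2)%N -> (size P <= 2)%N ->
  (size (WPsi S P n).1 <= n./2.+1)%N /\ (size (WPsi S P n).2 <= n.+1./2.+1)%N.
Proof.
move=> hS hP; elim: n => [|n [IH1 IH2]].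
  by rewrite /= size_poly1 -polyC_natr size_polyC; case: (_ != _).
rewrite WPsiS /=; split; first by [].
apply: leq_trans (size_polyD _ _) _; rewrite size_polyN geq_max; apply/andP; split.
  apply: leq_trans (sizeM_le (sizeXe _ hS) IH2) _.
  by rewrite /delta /= uphalf_half; case: (odd n) => /=; lia.
apply: leq_trans (sizeM_le hP IH1) _; lia.
Qed.

Lemma WPhi_size (R : comNzRingType) (S P : {poly R}) n :
  (size S <= 2)%N -> (size P <= 2)%N ->
  (size (WPhi S P n).1 <= n.-1./2.+1)%N /\ (size (WPhi S P n).2 <= n./2.+1)%N.
Proof.
move=> hS hP; elim: n => [|n [IH1 IH2]]; first by rewrite /= size_poly1 size_poly0.
rewrite WPhiS /=; split; first by [].
case: n IH1 IH2 => [|n] IH1 IH2.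
  by rewrite /= mulr0 subr0 expr0 mul1r size_poly1.
apply: leq_trans (size_polyD _ _) _; rewrite size_polyN geq_max; apply/andP; split.
  apply: leq_trans (sizeM_le (sizeXe _ hS) IH2) _.
  by rewrite /delta /= !uphalf_half; case: (odd n) => /=; lia.
apply: leq_trans (sizeM_le hP IH1) _.
by rewrite /= add1n.
Qed.

Lemma size_lin (R : nzSemiRingType) (c1 c0 : R) : (size (c1%:P * 'X + c0%:P)%R <= 2)%N.
Proof. by rewrite size_MXaddC; case: ifP => // _; rewrite ltnS size_polyC; case: (_ != _). Qed.

Local Open Scope complex_scope.

Theorem theorem10p2 (R : realType) (a b al be eta xi : R[i]) (n : nat) :
  be * a - al * b != 0 -> (0 < n)%N ->
  (\sum_(0 <= r < n./2.+1) PsiC a b al be n r * xi ^+ (n./2 - r) * eta ^+ r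
     = Psi (a * xi - al * eta) (b * xi - be * eta) n)
  /\
  (\sum_(0 <= r < n.-1./2.+1) PhiC a b al be n r * xi ^+ (n.-1./2 - r) * eta ^+ r
     = Phi (a * xi - al * eta) (b * xi - be * eta) n).
Proof.
move=> hD hn; split.
- pose W := fun (R0 : comNzRingType) (S P : R0) => (WPsi S P n).1.
  have Wm : forall (R1 R' : comNzRingType) (f : {rmorphism R1 -> R'}) (S P : R1),
      f (W _ S P) = W _ (f S) (f P) by move=> *; exact: (WPsi_morph _ _ _ _).1.
  have Wh : forall (R1 : comNzRingType) (k S P : R1), W _ (k * S) (k * P) = k ^+ n./2 * W _ S P.
    by move=> *; rewrite /W WPsi_hom.
  have Ws : forall c0 c1 d0 d1 : R[i],
      (size (W _ (c1%:P * 'X + c0%:P) (d1%:P * 'X + d0%:P))%R <= n./2.+1)%N.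
    by move=> *; exact: (WPsi_size _ (size_lin _ _) (size_lin _ _)).1.
  have closed (x y : R[i]) : x + y != 0 -> (x ^+ n + y ^+ n) / (x + y) ^+ delta n = (WPsi ((x + y) ^+ 2) (x * y) n).1.
    move=> hs; rewrite -(WPsi_closed x y n).1 /delta; rewrite mulfK //; exact: expf_neq0.
  have ex : exists c, is_Psi_coef a b al be n c.
    exists (fun r => (hpoly W a b al be)`_r) => x y hs.
    by rewrite closed // -(form_exist Wm Wh Ws).
  have spec := @epsilon_spec _ (inhabits (fun _ : nat => 0 : R[i])) _ ex.
  rewrite (@form_uniq _ W n./2 Wm Wh Ws a b al be hD (PsiC a b al be n)).
    rewrite Psi_WPsi /W; congr (WPsi _ _ n).1; ring.
  move=> x y _ hs; rewrite /W -(closed x y hs); symmetry; exact: spec.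
- pose W := fun (R0 : comNzRingType) (S P : R0) => (WPhi S P n).1.
  have Wm : forall (R1 R' : comNzRingType) (f : {rmorphism R1 -> R'}) (S P : R1),
      f (W _ S P) = W _ (f S) (f P) by move=> *; exact: (WPhi_morph _ _ _ _).1.
  have Wh : forall (R1 : comNzRingType) (k S P : R1), W _ (k * S) (k * P) = k ^+ n.-1./2 * W _ S P.
    by move=> *; rewrite /W WPhi_hom.
  have Ws : forall c0 c1 d0 d1 : R[i],
      (size (W _ (c1%:P * 'X + c0%:P) (d1%:P * 'X + d0%:P))%R <= n.-1./2.+1)%N.
    by move=> *; exact: (WPhi_size _ (size_lin _ _) (size_lin _ _)).1.
  have dn : delta n.-1 = ~~ odd n by rewrite -[in RHS](prednK hn) /delta /= negbK.
  have closed (x y : R[i]) : x - y != 0 -> x + y != 0 ->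
      (x ^+ n - y ^+ n) / ((x - y) * (x + y) ^+ delta n.-1) = (WPhi ((x + y) ^+ 2) (x * y) n).1.
    move=> hd hs; rewrite -(WPhi_closed x y n).1 dn -mulrA mulfK //.
    by rewrite mulf_neq0 // expf_neq0.
  have ex : exists c, is_Phi_coef a b al be n c.
    exists (fun r => (hpoly W a b al be)`_r) => x y hd hs.
    by rewrite closed // -(form_exist Wm Wh Ws).
  have spec := @epsilon_spec _ (inhabits (fun _ : nat => 0 : R[i])) _ ex.
  rewrite (@form_uniq _ W n.-1./2 Wm Wh Ws a b al be hD (PhiC a b al be n)).
    rewrite Phi_WPhi /W; congr (WPhi _ _ n).1; ring.
  move=> x y hd hs; rewrite /W -(closed x y hd hs); symmetry; exact: spec.
Qed.
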